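(* A ring $R$ is feckly clean if and only if $J\text{-spec}(R)$ is strongly zero-dimensional.
   Context: Rings are associative with identity, not necessarily commutative; $J(R)$ is the Jacobson radical. An element $u\in R$ is full if $RuR=R$. An element $a\in R$ is feckly clean if there exist $e\in R$ and a full element $u\in R$ with $a=e+u$ and $eR(1-e)\subseteq J(R)$; $R$ is feckly clean if every element is feckly clean. $J\text{-spec}(R)$ is the set of all prime (two-sided) ideals $P$ of $R$ with $J(R)\subseteq P$, topologized so that the closed sets are exactly the sets $W(I)=\{P\in J\text{-spec}(R): I\subseteq P\}$ for ideals $I$ of $R$. A topological space $X$ is strongly zero-dimensional if for any two disjoint closed sets $A,B\subseteq X$ there exist disjoint clopen sets $C_1,C_2$ with $A\subseteq C_1$ and $B\subseteq C_2$. *)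

(* Defs.v *)
From HB Require Import structures.
From mathcomp Require Import all_boot all_order all_algebra.
Set Implicit Arguments. Unset Strict Implicit. Unset Printing Implicit Defensive.
Import GRing.Theory.
Local Open Scope ring_scope.

Section RingDefs.
Variable R : pzRingType.

Definition left_ideal (I : R -> Prop) : Prop :=
  I 0 /\ (forall x y, I x -> I y -> I (x + y)) /\ (forall r x, I x -> I (r * x)).

Definition ideal (I : R -> Prop) : Prop :=
  I 0 /\ (forall x y, I x -> I y -> I (x + y)) /\
  (forall r x, I x -> I (r * x)) /\ (forall r x, I x -> I (x * r)).

Definition maximal_left_ideal (M : R -> Prop) : Prop :=
  left_ideal M /\ ~ M 1 /\
  (forall N, left_ideal N -> ~ N 1 -> (forall x, M x -> N x) -> forall x, N x -> M x).

Definition jacobson (x : R) : Prop :=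
  forall M, maximal_left_ideal M -> M x.

(* u is full: RuR = R, i.e. 1 is a finite sum of elements a u b *)
Definition full (u : R) : Prop :=
  exists (n : nat) (a b : 'I_n -> R), \sum_(i < n) a i * u * b i = 1.

Definition feckly_clean_elt (a : R) : Prop :=
  exists e u : R, full u /\ a = e + u /\ (forall r, jacobson (e * r * (1 - e))).

Definition feckly_clean : Prop := forall a : R, feckly_clean_elt a.

Definition prime_ideal (P : R -> Prop) : Prop :=
  ideal P /\ ~ P 1 /\
  (forall A B : R -> Prop, ideal A -> ideal B ->
     (forall a b, A a -> B b -> P (a * b)) ->
     (forall a, A a -> P a) \/ (forall b, B b -> P b)).

Definition Jspec : Type :=
  { P : R -> Prop | prime_ideal P /\ (forall x, jacobson x -> P x) }.

Definition W (I : R -> Prop) : Jspec -> Prop :=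
  fun P => forall x, I x -> proj1_sig P x.

Definition Jspec_closed (S : Jspec -> Prop) : Prop :=
  exists I : R -> Prop, ideal I /\ (forall P, S P <-> W I P).

End RingDefs.

(* a space given by its carrier and its family of closed sets *)
Definition clopen (X : Type) (closed : (X -> Prop) -> Prop) (C : X -> Prop) : Prop :=
  closed C /\ closed (fun x => ~ C x).

Definition strongly_zero_dimensional (X : Type) (closed : (X -> Prop) -> Prop) : Prop :=
  forall A B : X -> Prop, closed A -> closed B -> (forall x, A x -> B x -> False) ->
  exists C1 C2 : X -> Prop, clopen closed C1 /\ clopen closed C2 /\
    (forall x, C1 x -> C2 x -> False) /\
    (forall x, A x -> C1 x) /\ (forall x, B x -> C2 x).

(* Main.v *)
Require Import Defs.
From mathcomp Require Import all_boot all_order all_algebra.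
From mathcomp Require Import boolp classical_sets.
Import GRing.Theory.
Local Open Scope ring_scope.
Set Implicit Arguments. Unset Strict Implicit.

Lemma exists_max_left {R : pzRingType} (N : R -> Prop) :
  left_ideal N -> ~ N 1 -> exists M, maximal_left_ideal M /\ (forall x, N x -> M x).
Proof.
move=> [N0 [ND NM]] N1.
pose P := fun X : set R => ~ X 1 /\ ((forall x, ~ X x) \/ (left_ideal X /\ (forall x, N x -> X x))).
have [A [[A1 HA] Amax]] : exists A, P A /\ forall B, (A `<` B)%classic -> ~ P B.
  apply: Zorn_bigcup => F FP Ftot; split.
    by move=> [X FX X1]; case: (FP X FX).
  case: (pselect (exists X, F X /\ exists x, X x)) => [[X0 [FX0 [x0 X0x]]]|noX].
    right; split; last first.
      move=> x Nx; exists X0 => //.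
      by case: (FP X0 FX0) => _ [/(_ x0)//|[_ H]]; apply: H.
    have li : forall X, F X -> (exists x, X x) -> left_ideal X.
      by move=> X FX [x Xx]; case: (FP X FX) => _ [/(_ x)//|[]].
    split; first by exists X0 => //; case: (li X0 FX0 (ex_intro _ x0 X0x)).
    split.
      move=> x y [X FX Xx] [Y FY Yy].
      have [XY|YX] := Ftot X Y FX FY.
        exists Y => //; case: (li Y FY (ex_intro _ y Yy)) => _ [+ _]; apply => //.
        exact: XY.
      exists X => //; case: (li X FX (ex_intro _ x Xx)) => _ [+ _]; apply => //.
      exact: YX.
    move=> r x [X FX Xx]; exists X => //.
    by case: (li X FX (ex_intro _ x Xx)) => _ [_]; apply.
  left => x [X FX Xx]; apply: noX; by exists X; split => //; exists x.
case: HA => [A0|[Ali NA]].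
  exfalso; apply: (Amax N); last by split => //; right; split => //; split.
  split; first by move=> x /A0.
  by move=> /(_ 0 N0) /A0.
exists A; split => //; split => //; split => //.
move=> B Bli B1 AB x Bx.
apply: contrapT => Ax; apply: (Amax B); last by split => //; right; split => // y /NA /AB.
by split => // BA; apply: Ax; apply: BA.
Qed.

Lemma max_gen {R : pzRingType} (M : R -> Prop) z :
  maximal_left_ideal M -> ~ M z -> exists t m, M m /\ 1 = m + t * z.
Proof.
move=> [[M0 [MD MM]] [M1 Mmax]] Mz.
apply: contrapT => nK.
pose K := fun w => exists t m, M m /\ w = m + t * z.
apply: Mz; apply: (Mmax K) => //.
- split; first by exists 0, 0; split => //; rewrite mul0r addr0.
  split.
    move=> x y [t1 [m1 [Hm1 ->]]] [t2 [m2 [Hm2 ->]]].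
    exists (t1 + t2), (m1 + m2); split; first exact: MD.
    by rewrite mulrDl addrACA.
  move=> r x [t [m [Hm ->]]]; exists (r * t), (r * m); split; first exact: MM.
  by rewrite mulrDr mulrA.
- by move=> x Mx; exists 0, x; split => //; rewrite mul0r addr0.
- by exists 1, 0; split => //; rewrite mul1r add0r.
Qed.

Lemma colon_max {R : pzRingType} (M : R -> Prop) y :
  maximal_left_ideal M -> ~ M y -> maximal_left_ideal (fun r => M (r * y)).
Proof.
move=> HM My; have HM' := HM; case: HM' => [[M0 [MD MM]] [M1 Mmax]].
split.
  split; first by rewrite mul0r.
  split; first by move=> a b Ha Hb; rewrite mulrDl; apply: MD.
  by move=> r x Hx; rewrite -mulrA; apply: MM.
split; first by rewrite mul1r.
move=> N [N0 [ND NM]] N1 MN x Nx.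
apply: contrapT => Mxy.
have [t [m [Hm E]]] := max_gen HM Mxy.
apply: N1.
have H1 : N (1 - y * t * x).
  apply: MN.
  have -> : (1 - y * t * x) * y = y * m.
    rewrite mulrBl mul1r; have -> : m = 1 - t * (x * y) by rewrite E addrK.
    by rewrite mulrBr mulr1 !mulrA.
  exact: MM.
have H2 : N (y * t * x) by apply: NM.
by have := ND _ _ H1 H2; rewrite subrK.
Qed.

Lemma jac_mulr {R : pzRingType} (j y : R) : jacobson j -> jacobson (j * y).
Proof.
move=> Hj M HM.
case: (pselect (M y)) => My.
  by case: HM => [[_ [_ MM]] _]; apply: MM.
exact: (Hj _ (colon_max HM My)).
Qed.

Definition Ann {R : pzRingType} (M : R -> Prop) := fun r => forall y, M (r * y).

Lemma Ann_prime {R : pzRingType} (M : R -> Prop) :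
  maximal_left_ideal M -> prime_ideal (Ann M) /\ (forall x, jacobson x -> Ann M x).
Proof.
move=> HM; have HM' := HM; case: HM' => [[M0 [MD MM]] [M1 Mmax]].
split; last by move=> x Hx y; apply: (jac_mulr y Hx).
split.
  split; first by move=> y; rewrite mul0r.
  split; first by move=> a b Ha Hb y; rewrite mulrDl; apply: MD.
  split; first by move=> r x Hx y; rewrite -mulrA; apply: MM.
  by move=> r x Hx y; rewrite -mulrA.
split; first by move=> /(_ 1); rewrite mulr1.
move=> A B [A0 [AD [AL AR]]] [B0 [BD [BL BR]]] AB.
case: (pselect (forall a, A a -> Ann M a)) => HA; [by left | right].
have [a [Aa Na]] : exists a, A a /\ ~ Ann M a.
  apply: contrapT => nE; apply: HA => a Aa; apply: contrapT => Na.
  by apply: nE; exists a.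
have [s Ms] : exists s, ~ M (a * s).
  apply: contrapT => nE; apply: Na => s; apply: contrapT => Ms.
  by apply: nE; exists s.
move=> b Bb y; apply: contrapT => Mby.
have [t [m [Hm E]]] := max_gen HM Mby.
apply: Ms.
have -> : a * s = a * s * m + (a * s * t) * (b * y).
  by rewrite -[(a * s * t) * (b * y)]mulrA -mulrDr -E mulr1.
apply: MD; first exact: MM.
have := AB _ _ (AR t _ (AR s _ Aa)) (BR y _ Bb) 1.
by rewrite mulr1.
Qed.

Definition AnnJ {R : pzRingType} (M : R -> Prop) (HM : maximal_left_ideal M) : Jspec R :=
  exist _ (Ann M) (Ann_prime HM).

Lemma ideal_in_Jspec {R : pzRingType} (T : R -> Prop) :
  ideal T -> ~ T 1 -> exists P : Jspec R, forall x, T x -> proj1_sig P x.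
Proof.
move=> [T0 [TD [TL TR]]] T1.
have [M [HM TM]] := exists_max_left (conj T0 (conj TD TL)) T1.
by exists (AnnJ HM) => x Tx y /=; apply: TM; apply: TR.
Qed.

Lemma Jspec_jac {R : pzRingType} (x : R) :
  (forall P : Jspec R, proj1_sig P x) -> jacobson x.
Proof.
move=> H M HM; have := H (AnnJ HM) 1; by rewrite /= mulr1.
Qed.

Definition Tgen {R : pzRingType} (x : R) := fun z : R =>
  exists (n : nat) (a b : 'I_n -> R), \sum_(i < n) a i * x * b i = z.

Lemma Tgen_ideal {R : pzRingType} (x : R) : ideal (Tgen x).
Proof.
split; first by exists 0%N, (fun _ => 0), (fun _ => 0); rewrite big_ord0.
split.
  move=> y z [n1 [a1 [b1 <-]]] [n2 [a2 [b2 <-]]].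
  exists (n1 + n2)%N.
  exists (fun i => match split i with inl j => a1 j | inr k => a2 k end).
  exists (fun i => match split i with inl j => b1 j | inr k => b2 k end).
  rewrite big_split_ord /=; congr (_ + _); apply: eq_bigr => i _.
    by have -> : split (lshift n2 i) = inl i := unsplitK (inl i).
  by have -> : split (rshift n1 i) = inr i := unsplitK (inr i).
split.
  move=> r y [n [a [b <-]]]; exists n, (fun i => r * a i), b.
  by rewrite mulr_sumr; apply: eq_bigr => i _; rewrite !mulrA.
move=> r y [n [a [b <-]]]; exists n, a, (fun i => b i * r).
by rewrite mulr_suml; apply: eq_bigr => i _; rewrite !mulrA.
Qed.

Lemma Tgen_self {R : pzRingType} (x : R) : Tgen x x.
Proof.
by exists 1%N, (fun _ => 1), (fun _ => 1); rewrite big_ord1 mul1r mulr1.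
Qed.

Lemma ideal_sum {R : pzRingType} (P : R -> Prop) (n : nat) (F : 'I_n -> R) :
  ideal P -> (forall i, P (F i)) -> P (\sum_(i < n) F i).
Proof.
move=> [P0 [PD _]] HF.
by apply: (big_ind (fun z => P z)) => // i _; apply: HF.
Qed.

Lemma Tgen_sub {R : pzRingType} (P : R -> Prop) (x z : R) :
  ideal P -> P x -> Tgen x z -> P z.
Proof.
move=> HP Px [n [a [b <-]]]; apply: ideal_sum => // i.
case: HP => [_ [_ [PL PR]]]; apply: PR; apply: PL; exact: Px.
Qed.

Lemma full_notin {R : pzRingType} (P : R -> Prop) (u : R) :
  full u -> ideal P -> ~ P 1 -> ~ P u.
Proof. by move=> Hu HP P1 Pu; apply: P1; apply: (Tgen_sub HP Pu Hu). Qed.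

Lemma notfull_in {R : pzRingType} (u : R) :
  ~ full u -> exists P : Jspec R, proj1_sig P u.
Proof.
move=> nf; have [P HP] := ideal_in_Jspec (Tgen_ideal u) nf.
by exists P; apply: HP; apply: Tgen_self.
Qed.

Lemma prime_elt {R : pzRingType} (P : R -> Prop) (x y : R) :
  prime_ideal P -> (forall r, P (x * r * y)) -> P x \/ P y.
Proof.
move=> [HP [P1 Hpr]] Hxy.
have HP' := HP; case: HP' => [P0 [PD [PL PR]]].
have Hprod : forall a b, Tgen x a -> Tgen y b -> P (a * b).
  move=> a b [n [c [d <-]]] Tb.
  rewrite mulr_suml; apply: ideal_sum => // i.
  rewrite -!mulrA; apply: PL.
  have : Tgen y (d i * b) by case: (Tgen_ideal y) => [_ [_ [TL _]]]; apply: TL.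
  move=> [m [c' [d' <-]]].
  rewrite mulr_sumr; apply: ideal_sum => // j.
  by rewrite !mulrA; apply: PR.
by case: (Hpr _ _ (Tgen_ideal x) (Tgen_ideal y) Hprod) => H; [left|right];
  apply: H; apply: Tgen_self.
Qed.

Lemma disj_sum {R : pzRingType} (I K : R -> Prop) :
  ideal I -> ideal K -> ~ (exists P : Jspec R, W I P /\ W K P) ->
  exists i k, I i /\ K k /\ i + k = 1.
Proof.
move=> [I0 [ID [IL IR]]] [K0 [KD [KL KR]]] nP.
pose S := fun z => exists i k, I i /\ K k /\ z = i + k.
apply: contrapT => nS.
have HS : ideal S.
  split; first by exists 0, 0; rewrite addr0.
  split.
    move=> a b [i1 [k1 [? [? ->]]]] [i2 [k2 [? [? ->]]]].
    by exists (i1 + i2), (k1 + k2); repeat split; auto; rewrite addrACA.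
  split.
    move=> r a [i [k [? [? ->]]]]; exists (r * i), (r * k).
    by repeat split; auto; rewrite mulrDr.
  move=> r a [i [k [? [? ->]]]]; exists (i * r), (k * r).
  by repeat split; auto; rewrite mulrDl.
have [P HP] := ideal_in_Jspec HS (fun '(ex_intro i (ex_intro k (conj Ii (conj Kk E)))) =>
  nS (ex_intro _ i (ex_intro _ k (conj Ii (conj Kk (esym E)))))).
apply: nP; exists P; split.
  by move=> i Ii; apply: HP; exists i, 0; rewrite addr0.
by move=> k Kk; apply: HP; exists 0, k; rewrite add0r.
Qed.

Unset Implicit Arguments.
Lemma Pideal {R : pzRingType} (P : Jspec R) : ideal (proj1_sig P).
Proof. by destruct P as [p [[H1 H2] H3]]. Qed.
Lemma Pprime {R : pzRingType} (P : Jspec R) : prime_ideal (proj1_sig P).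
Proof. by destruct P as [p [H1 H3]]. Qed.
Lemma Pnot1 {R : pzRingType} (P : Jspec R) : ~ proj1_sig P 1.
Proof. by destruct P as [p [[H1 [H2 H4]] H3]]. Qed.
Lemma PJ {R : pzRingType} (P : Jspec R) x : jacobson x -> proj1_sig P x.
Proof. by destruct P as [p [H1 H3]]; apply: H3. Qed.

Lemma W_Tgen {R : pzRingType} (x : R) (P : Jspec R) :
  W (Tgen x) P <-> proj1_sig P x.
Proof.
split; first by move=> H; apply: H; apply: Tgen_self.
by move=> Px z; apply: Tgen_sub => //; apply: Pideal.
Qed.

Lemma P_add {R : pzRingType} (P : Jspec R) x y :
  proj1_sig P x -> proj1_sig P y -> proj1_sig P (x + y).
Proof. by case: (Pideal P) => [_ [H _]]; apply: H. Qed.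
Lemma P_mull {R : pzRingType} (P : Jspec R) r x :
  proj1_sig P x -> proj1_sig P (r * x).
Proof. by case: (Pideal P) => [_ [_ [H _]]]; apply: H. Qed.
Lemma P_mulr {R : pzRingType} (P : Jspec R) r x :
  proj1_sig P x -> proj1_sig P (x * r).
Proof. by case: (Pideal P) => [_ [_ [_ H]]]; apply: H. Qed.
Lemma P_opp {R : pzRingType} (P : Jspec R) x :
  proj1_sig P x -> proj1_sig P (- x).
Proof. by move=> Px; rewrite -mulN1r; apply: P_mull. Qed.

Theorem theorem3p3 (R : pzRingType) :
  feckly_clean R <-> strongly_zero_dimensional (@Jspec_closed R).
Proof.
split.
- move=> FC A B [I [HI HA]] [K [HK HB]] disj.
  have [i [k [Ii [Kk ik]]]] : exists i k, I i /\ K k /\ i + k = 1.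
    apply: disj_sum => // -[P [WI WK]].
    by apply: (disj P); [apply/HA | apply/HB].
  have [e [u [fu [keu He]]]] := FC k.
  have ue : u = k - e by rewrite keu addrC addKr.
  have dich : forall P : Jspec R, proj1_sig P e \/ proj1_sig P (1 - e).
    move=> P; apply: prime_elt; first exact: Pprime.
    by move=> r; apply: PJ.
  have notboth : forall P : Jspec R, proj1_sig P e -> proj1_sig P (1 - e) -> False.
    by move=> P Pe Pe'; case: (Pnot1 P); rewrite -(subrK e 1); apply: P_add.
  have nu : forall P : Jspec R, ~ proj1_sig P u.
    by move=> P; apply: full_notin fu (Pideal P) (Pnot1 P).
  exists (W (Tgen e)), (W (Tgen (1 - e))).
  split.
    split; first by exists (Tgen e); split => //; apply: Tgen_ideal.
    exists (Tgen (1 - e)); split; first exact: Tgen_ideal.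
    move=> P; rewrite !W_Tgen; split.
      by case: (dich P) => // Pe nPe; exfalso; apply: nPe.
    by move=> Pe' Pe; apply: (notboth P).
  split.
    split; first by exists (Tgen (1 - e)); split => //; apply: Tgen_ideal.
    exists (Tgen e); split; first exact: Tgen_ideal.
    move=> P; rewrite !W_Tgen; split.
      by case: (dich P) => // Pe nPe; exfalso; apply: nPe.
    by move=> Pe Pe'; apply: (notboth P).
  split; first by move=> P; rewrite !W_Tgen; apply: notboth.
  split.
    move=> P /HA WI; rewrite W_Tgen; have Pi := WI i Ii.
    case: (dich P) => // Pe'; exfalso; apply: (nu P).
    have -> : u = - i + (1 - e) by rewrite ue -ik addrA addKr.
    by apply: P_add => //; apply: P_opp.
  move=> P /HB WK; rewrite W_Tgen; have Pk := WK k Kk.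
  case: (dich P) => // Pe; exfalso; apply: (nu P).
  by rewrite ue; apply: P_add => //; apply: P_opp.
- move=> SZD a.
  have cl : forall x : R, Jspec_closed (W (Tgen x)).
    by move=> x; exists (Tgen x); split => //; apply: Tgen_ideal.
  have dAB : forall P : Jspec R, W (Tgen a) P -> W (Tgen (1 - a)) P -> False.
    move=> P; rewrite !W_Tgen => Pa Pa'; case: (Pnot1 P).
    by rewrite -(subrK a 1); apply: P_add.
  have [C1 [C2 [[[I [HI HC1]] [K [HK HC1c]]] [_ [disj [AC1 BC2]]]]]] :=
    SZD _ _ (cl a) (cl (1 - a)) dAB.
  have [i [k [Ii [Kk ik]]]] : exists i k, I i /\ K k /\ i + k = 1.
    apply: disj_sum => // -[P [WI WK]].
    by apply: (proj2 (HC1c P) WK); apply/HC1.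
  have ki : 1 - k = i by rewrite -ik addrK.
  exists k, (a - k); split; last split.
  + apply: contrapT => /notfull_in [P Pak].
    case: (pselect (C1 P)) => C1P.
      have Pi := proj1 (HC1 P) C1P i Ii.
      apply: (disj P C1P); apply: BC2; rewrite W_Tgen.
      have -> : 1 - a = i - (a - k) by rewrite opprB addrA ik.
      by apply: P_add => //; apply: P_opp.
    have Pk := proj1 (HC1c P) C1P k Kk.
    apply: C1P; apply: AC1; rewrite W_Tgen.
    by rewrite -(subrK k a); apply: P_add.
  + by rewrite addrC subrK.
  + move=> r; rewrite ki; apply: Jspec_jac => P.
    case: (pselect (C1 P)) => C1P.
      by apply: P_mull; apply: (proj1 (HC1 P) C1P i Ii).
    by apply: P_mulr; apply: P_mulr; apply: (proj1 (HC1c P) C1P k Kk).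
Qed.
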